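(* Let $K$ be a field of characteristic zero and let $D$ be a simple digraph with vertex set $\{v_1,\dots,v_n\}$ and edge set $\{e_1,\dots,e_m\}$. Let $I(D,E)$ be the ideal of $K[e_1,\dots,e_m,v_1,\dots,v_n,z_1,\dots,z_n]$ generated by the binomials $e_h-z_iv_j$ for every edge $e_h=[v_i,v_j]$ of $D$, together with $z_iv_i-1$ for $i=1,\dots,n$, and let $I(E)_D=I(D,E)\cap K[e_1,\dots,e_m]$. Then $I(E)_D$ is generated by the binomials $f_C$, where $C$ ranges over the cycles of $D$.
   Context: $[v_i,v_j]$ denotes the directed edge from $v_i$ to $v_j$. A cycle of $D$ is a sequence of distinct vertices $v_{i(1)},\dots,v_{i(q)}$ ($q\ge 2$) together with distinct edges $e_{h_1},\dots,e_{h_q}$ of $D$ such that, setting $v_{i(q+1)}=v_{i(1)}$, each $e_{h_k}$ is either $[v_{i(k)},v_{i(k+1)}]$ or $[v_{i(k+1)},v_{i(k)}]$ (i.e. a cycle of the underlying undirected graph, edge directions ignored). It is a directed cycle if $e_{h_k}=[v_{i(k)},v_{i(k+1)}]$ for all $k$. For such a cycle, traversed in the given order, let $I$ be the set of indices $h_k$ with $e_{h_k}=[v_{i(k)},v_{i(k+1)}]$ (edges traversed along their direction) and $J$ the set of the remaining indices; then $f_C=\prod_{h\in I}e_h-\prod_{h\in J}e_h$ (an empty product equals $1$; so for a directed cycle $f_C=\prod_{h\in I}e_h-1$). Equivalently, $I(E)_D$ is the toric ideal, i.e. the kernel of the $K$-algebra map $K[e_1,\dots,e_m]\to K[v_1^{\pm1},\dots,v_n^{\pm1}]$,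 $e_h\mapsto v_jv_i^{-1}$ for $e_h=[v_i,v_j]$. *)

(* Defs.v *)
From HB Require Import structures.
From mathcomp Require Import all_boot all_order all_algebra.
From mathcomp Require Import mpoly.
Set Implicit Arguments. Unset Strict Implicit. Unset Printing Implicit Defensive.
Import GRing.Theory.
Local Open Scope ring_scope.

Definition ideal_gen (R : comPzRingType) (S : R -> Prop) (f : R) : Prop :=
  exists (gs cs : seq R), [/\ size cs = size gs, (forall g, g \in gs -> S g) &
     f = \sum_(k < size gs) cs`_k * gs`_k].

(* A simple digraph on vertices 'I_n with edges e_h (h : 'I_m):
   edge h is [v_(tl h), v_(hd h)] = (edge h).1 -> (edge h).2;
   no loops, no multiple (parallel, same-direction) edges. *)
Definition simple_digraph (n m : nat) (edge : 'I_m -> 'I_n * 'I_n) : Prop :=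
  injective edge /\ (forall h, (edge h).1 != (edge h).2).

Definition is_cycle (n m : nat) (edge : 'I_m -> 'I_n * 'I_n)
    (vs : seq 'I_n) (es : seq 'I_m) : Prop :=
  [/\ (2 <= size vs)%N, size es = size vs, uniq vs, uniq es &
    forall k, (k < size vs)%N -> forall (v0 : 'I_n) (e0 : 'I_m),
      let a := nth v0 vs k in
      let b := nth v0 vs ((k.+1) %% size vs) in
      let e := nth e0 es k in
      edge e = (a, b) \/ edge e = (b, a)].

Definition cycle_fwd (n m : nat) (edge : 'I_m -> 'I_n * 'I_n)
    (vs : seq 'I_n) (es : seq 'I_m) (k : nat) : bool :=
  match vs, es with
  | v0 :: _, e0 :: _ =>
      edge (nth e0 es k) == (nth v0 vs k, nth v0 vs (k.+1 %% size vs))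
  | _, _ => false
  end.

Definition f_cycle (K : fieldType) (n m : nat) (edge : 'I_m -> 'I_n * 'I_n)
    (vs : seq 'I_n) (es : seq 'I_m) : {mpoly K[m]} :=
  match es with
  | e0 :: _ =>
     \prod_(k < size es | cycle_fwd edge vs es k) 'X_(nth e0 es k)
   - \prod_(k < size es | ~~ cycle_fwd edge vs es k) 'X_(nth e0 es k)
  | [::] => 0
  end.

Definition evar (n m : nat) (h : 'I_m) : 'I_(m + n + n) := lshift n (lshift n h).
Definition vvar (n m : nat) (i : 'I_n) : 'I_(m + n + n) := lshift n (rshift m i).
Definition zvar (n m : nat) (i : 'I_n) : 'I_(m + n + n) := rshift (m + n) i.

Definition IDE_gens (K : fieldType) (n m : nat) (edge : 'I_m -> 'I_n * 'I_n)
    (g : {mpoly K[m + n + n]}) : Prop :=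
  (exists h : 'I_m,
     g = 'X_(evar n h) - 'X_(zvar m (edge h).1) * 'X_(vvar m (edge h).2))
  \/ (exists i : 'I_n, g = 'X_(zvar m i) * 'X_(vvar m i) - 1).

Definition embE (K : fieldType) (n m : nat) (p : {mpoly K[m]})
    : {mpoly K[m + n + n]} :=
  mmap (@mpolyC (m + n + n) K) (fun h => 'X_(evar n h)) p.

(* I(E)_D = I(D,E) ∩ K[e_1..e_m], viewed inside K[e_1..e_m]. *)
Definition IED (K : fieldType) (n m : nat) (edge : 'I_m -> 'I_n * 'I_n)
    (f : {mpoly K[m]}) : Prop :=
  ideal_gen (IDE_gens edge) (embE n f).

Definition cycle_binomials (K : fieldType) (n m : nat)
    (edge : 'I_m -> 'I_n * 'I_n) (f : {mpoly K[m]}) : Prop :=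
  exists vs es, is_cycle edge vs es /\ f = f_cycle K edge vs es.

(* Main.v *)
Require Import Defs.
From HB Require Import structures.
From mathcomp Require Import all_boot all_order all_algebra.
From mathcomp Require Import mpoly.
From mathcomp Require Import ring.
From mathcomp Require Import zify.
Set Implicit Arguments. Unset Strict Implicit. Unset Printing Implicit Defensive.
Import GRing.Theory.
Local Open Scope ring_scope.
Section IG.
Variable R : comPzRingType.
Variable S : R -> Prop.

Lemma igE f : ideal_gen S f <->
  exists l : seq (R * R), (forall p, p \in l -> S p.2) /\ f = \sum_(p <- l) p.1 * p.2.
Proof.
split.
- case=> gs [cs [Hs HS ->]].
  exists (zip cs gs); split.
    move=> p Hp; apply: HS; rewrite -(@unzip2_zip _ _ cs gs); last by rewrite Hs.
    exact: (map_f snd Hp).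
  rewrite (big_nth (0,0)) big_mkord size_zip Hs minnn.
  by apply: eq_bigr => k _; rewrite nth_zip.
- case=> l [Hl ->]; exists (unzip2 l), (unzip1 l); split.
  + by rewrite !size_map.
  + by move=> g /mapP [p Hp ->]; apply: Hl.
  + rewrite (big_nth (0,0)) big_mkord size_map.
    by apply: eq_bigr => k _; rewrite !(nth_map (0,0)).
Qed.

Lemma ig0 : ideal_gen S 0.
Proof. by apply/igE; exists [::]; rewrite big_nil. Qed.

Lemma igS g : S g -> ideal_gen S g.
Proof.
by move=> Hg; apply/igE; exists [:: (1, g)]; rewrite big_seq1 mul1r; split => // p; rewrite inE => /eqP ->.
Qed.

Lemma igD f g : ideal_gen S f -> ideal_gen S g -> ideal_gen S (f + g).
Proof.
move=> /igE [l1 [H1 ->]] /igE [l2 [H2 ->]]; apply/igE; exists (l1 ++ l2); split.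
  by move=> p; rewrite mem_cat => /orP [] ?; [apply: H1|apply: H2].
by rewrite big_cat.
Qed.

Lemma igM c f : ideal_gen S f -> ideal_gen S (c * f).
Proof.
move=> /igE [l [H ->]]; apply/igE; exists [seq (c * p.1, p.2) | p <- l]; split.
  by move=> p /mapP [q Hq ->]; exact: (H q Hq).
by rewrite big_map mulr_sumr; apply: eq_bigr => p _; rewrite mulrA.
Qed.

Lemma igN f : ideal_gen S f -> ideal_gen S (- f).
Proof. by move=> H; rewrite -mulN1r; apply: igM. Qed.

Lemma igB f g : ideal_gen S f -> ideal_gen S g -> ideal_gen S (f - g).
Proof. by move=> Hf Hg; apply: igD => //; apply: igN. Qed.

Lemma ig_sum (I : Type) (r : seq I) (P : pred I) (F : I -> R) :
  (forall i, P i -> ideal_gen S (F i)) -> ideal_gen S (\sum_(i <- r | P i) F i).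
Proof.
move=> H; elim/big_rec: _ => [|i x Pi Hx]; first exact: ig0.
by apply: igD => //; apply: H.
Qed.

Definition cong x y := ideal_gen S (x - y).
Lemma cong_refl x : cong x x. Proof. by rewrite /cong subrr; apply: ig0. Qed.
Lemma cong_sym x y : cong x y -> cong y x.
Proof. by move=> H; rewrite /cong -opprB; apply: igN. Qed.
Lemma cong_trans x y z : cong x y -> cong y z -> cong x z.
Proof. by move=> H1 H2; rewrite /cong -(subrK y x) -addrA; apply: igD. Qed.
Lemma congM x1 y1 x2 y2 : cong x1 y1 -> cong x2 y2 -> cong (x1 * x2) (y1 * y2).
Proof.
move=> H1 H2; rewrite /cong.
have -> : x1 * x2 - y1 * y2 = x1 * (x2 - y2) + y2 * (x1 - y1) by ring.
by apply: igD; apply: igM.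
Qed.
Lemma cong_prod (I : Type) (r : seq I) (P : pred I) (F G : I -> R) :
  (forall i, P i -> cong (F i) (G i)) ->
  cong (\prod_(i <- r | P i) F i) (\prod_(i <- r | P i) G i).
Proof.
move=> H; apply: (big_ind2 cong) => //; first exact: cong_refl.
by move=> ? ? ? ?; apply: congM.
Qed.
End IG.


Lemma sum_widen (T : eqType) (V : nmodType) (s t : seq T) (F : T -> V) :
  uniq s -> uniq t -> {subset t <= s} -> (forall x, x \notin t -> F x = 0) ->
  \sum_(x <- s) F x = \sum_(x <- t) F x.
Proof.
move=> us ut sub HF.
rewrite (bigID (mem t)) /= [X in _ + X]big1 ?addr0; last by move=> x /HF.
rewrite -big_filter; apply: perm_big; apply: uniq_perm => //; first exact: filter_uniq.
by move=> x; rewrite mem_filter; apply/andP/idP => [[]//|Hx]; split => //; apply: sub.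
Qed.

Section Main.
Variables (K : fieldType) (n m : nat) (edge : 'I_m -> 'I_n * 'I_n).
Local Notation N := (m + n + n)%N.

Definition w (h : 'I_m) (i : 'I_n) : int := ((edge h).2 == i)%:Z - ((edge h).1 == i)%:Z.
Definition wtE (a : 'X_{1..m}) : {ffun 'I_n -> int} := [ffun i => \sum_h (a h)%:Z * w h i].
Definition wt (mu : 'X_{1..N}) : {ffun 'I_n -> int} :=
  [ffun i => \sum_h (mu (evar n h))%:Z * w h i + (mu (vvar m i))%:Z - (mu (zvar m i))%:Z].
Definition L (c : {ffun 'I_n -> int}) (p : {mpoly K[N]}) : K :=
  \sum_(mu <- msupp p | wt mu == c) p@_mu.

Lemma wtD mu1 mu2 : wt (mu1 + mu2)%MM = wt mu1 + wt mu2.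
Proof.
apply/ffunP => i; rewrite !ffunE !mnmDE !PoszD.
rewrite (eq_bigr (fun h => (mu1 (evar n h))%:Z * w h i + (mu2 (evar n h))%:Z * w h i)).
  by rewrite big_split /=; ring.
by move=> h _; rewrite mnmDE PoszD mulrDl.
Qed.

Lemma wtED a1 a2 : wtE (a1 + a2)%MM = wtE a1 + wtE a2.
Proof.
apply/ffunP => i; rewrite !ffunE -big_split /=; apply: eq_bigr => h _.
by rewrite mnmDE PoszD mulrDl.
Qed.

Lemma Lsup c p s : uniq s -> {subset msupp p <= s} ->
  L c p = \sum_(mu <- s | wt mu == c) p@_mu.
Proof.
move=> us sub; rewrite /L big_mkcond [RHS]big_mkcond; symmetry; apply: (@sum_widen _ K) => //.
  all: try exact: msupp_uniq.
by move=> x Hx; rewrite memN_msupp_eq0 //; case: ifP.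
Qed.

Lemma LD c p q : L c (p + q) = L c p + L c q.
Proof.
set s := undup (msupp p ++ msupp q).
have us : uniq s by apply: undup_uniq.
rewrite !(@Lsup c _ s) //.
- by rewrite -big_split; apply: eq_bigr => mu _; rewrite mcoeffD.
- by move=> x Hx; rewrite mem_undup mem_cat Hx orbT.
- by move=> x Hx; rewrite mem_undup mem_cat Hx.
- by move=> x /msuppD_le; rewrite mem_undup.
Qed.

Lemma L0 c : L c 0 = 0.
Proof.
rewrite (@Lsup c _ [::]) ?big_nil //.
by move=> x; rewrite mcoeff_msupp mcoeff0 eqxx.
Qed.

Lemma LN c p : L c (- p) = - L c p.
Proof.
rewrite (@Lsup c _ (msupp p)) ?msupp_uniq //.
  by rewrite /L -sumrN; apply: eq_bigr => mu _; rewrite mcoeffN.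
by move=> x; rewrite (perm_mem (msuppN p)).
Qed.

Lemma LB c p q : L c (p - q) = L c p - L c q.
Proof. by rewrite LD LN. Qed.

Lemma Lsum c (I : Type) (r : seq I) (P : pred I) (F : I -> {mpoly K[N]}) :
  L c (\sum_(i <- r | P i) F i) = \sum_(i <- r | P i) L c (F i).
Proof. by apply: (big_morph (L c)); [apply: LD | apply: L0]. Qed.

Lemma LMX c p al : L c (p * 'X_[al]) = L (c - wt al) p.
Proof.
rewrite /L (perm_big _ (msuppMX p al)) big_map; apply: eq_big => mu.
  rewrite wtD; apply/eqP/eqP => [<-|->].
    by rewrite [wt al + _]addrC addrK.
  by rewrite [wt al + _]addrC subrK.
by move=> _; rewrite mcoeffMX.
Qed.

Lemma evar_eq (h h' : 'I_m) : (evar n h == evar n h') = (h == h').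
Proof. by rewrite -val_eqE /= val_eqE. Qed.
Lemma vvar_eq (i i' : 'I_n) : (vvar m i == vvar m i') = (i == i').
Proof. by rewrite -val_eqE /= eqn_add2l val_eqE. Qed.
Lemma zvar_eq (i i' : 'I_n) : (zvar m i == zvar m i') = (i == i').
Proof. by rewrite -val_eqE /= eqn_add2l val_eqE. Qed.
Lemma evar_vvar (h : 'I_m) (i : 'I_n) : (evar n h == vvar m i) = false.
Proof. apply/negbTE; rewrite -val_eqE /= neq_ltn; case: h => h /= Hh; by rewrite ltn_addr. Qed.
Lemma evar_zvar (h : 'I_m) (i : 'I_n) : (evar n h == zvar m i) = false.
Proof. by apply/negbTE; rewrite -val_eqE /= neq_ltn; case: h => h /= Hh; rewrite -addnA ltn_addr. Qed.
Lemma vvar_zvar (i i' : 'I_n) : (vvar m i == zvar m i') = false.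
Proof. by apply/negbTE; rewrite -val_eqE /= neq_ltn; case: i => i /= Hi; rewrite -addnA ltn_add2l ltn_addr. Qed.

Lemma wtU_e (h : 'I_m) : wt U_(evar n h) = [ffun i => w h i].
Proof.
apply/ffunP => i; rewrite !ffunE !mnm1E evar_vvar evar_zvar subr0 addr0.
rewrite (bigD1 h) //= mnm1E eqxx mul1r big1 ?addr0 //.
by move=> h' Hh'; rewrite mnm1E evar_eq eq_sym (negbTE Hh') mul0r.
Qed.

Lemma wtU_v (j : 'I_n) : wt U_(vvar m j) = [ffun i => (j == i)%:Z].
Proof.
apply/ffunP => i; rewrite !ffunE !mnm1E vvar_eq vvar_zvar subr0 big1 ?add0r //.
by move=> h _; rewrite mnm1E eq_sym evar_vvar mul0r.
Qed.

Lemma wtU_z (j : 'I_n) : wt U_(zvar m j) = [ffun i => - (j == i)%:Z].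
Proof.
apply/ffunP => i; rewrite !ffunE !mnm1E zvar_eq eq_sym vvar_zvar big1 ?add0r ?sub0r //.
by move=> h _; rewrite mnm1E eq_sym evar_zvar mul0r.
Qed.

Lemma wt0 : wt 0%MM = 0.
Proof.
apply/ffunP => i; rewrite !ffunE !mnm0E subr0 addr0 big1 //.
by move=> h _; rewrite mnm0E mul0r.
Qed.

Lemma Lgen c p g : IDE_gens edge g -> L c (p * g) = 0.
Proof.
case=> [[h ->]|[i ->]].
- rewrite -mpolyXD mulrBr LB !LMX.
  suff -> : wt U_(evar n h) = wt (U_(zvar m (edge h).1) + U_(vvar m (edge h).2))%MM by rewrite subrr.
  rewrite wtD wtU_e wtU_z wtU_v; apply/ffunP => j; rewrite !ffunE /w; ring.
- rewrite -mpolyXD -mpolyX0 mulrBr LB !LMX.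
  suff -> : wt (U_(zvar m i) + U_(vvar m i))%MM = wt 0%MM by rewrite subrr.
  rewrite wtD wtU_z wtU_v wt0; apply/ffunP => j; rewrite !ffunE; ring.
Qed.

Lemma L_ideal c q : ideal_gen (IDE_gens edge) q -> L c q = 0.
Proof.
move=> /igE [l [Hl ->]]; rewrite Lsum big_seq big1 // => p /Hl Hp.
exact: Lgen.
Qed.

Definition iota (a : 'X_{1..m}) : 'X_{1..N} := (\sum_(h < m) U_(evar n h) *+ a h)%MM.

Lemma iotaE a j : iota a j = (\sum_(h < m) (evar n h == j) * a h)%N.
Proof. by rewrite /iota mnm_sumE; apply: eq_bigr => h _; rewrite mulmnE mnm1E. Qed.

Lemma wt_iota a : wt (iota a) = wtE a.
Proof.
apply/ffunP => i.
have Hv : iota a (vvar m i) = 0%N by rewrite iotaE big1 // => h _; rewrite evar_vvar.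
have Hz : iota a (zvar m i) = 0%N by rewrite iotaE big1 // => h _; rewrite evar_zvar.
rewrite !ffunE Hv Hz subr0 addr0.
apply: eq_bigr => h _; rewrite iotaE (bigD1 h) //= evar_eq eqxx mul1n big1 ?addn0 //.
by move=> h' Hh'; rewrite evar_eq (negbTE Hh').
Qed.

Lemma embEX a : mmap (@mpolyC N K) (fun h => 'X_(evar n h)) 'X_[a] = 'X_[iota a].
Proof. by rewrite mmapX /mmap1 mprodXnE. Qed.

Lemma L_mono c k mu : L c (k%:MP * 'X_[mu]) = k * (wt mu == c)%:R.
Proof.
rewrite (@Lsup c _ [:: mu]) //.
  rewrite big_mkcond big_cons big_nil /= addr0 mcoeffCM mcoeffX eqxx mulr1.
  by case: ifP => _; rewrite ?mulr1 ?mulr0.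
move=> x; rewrite mcoeff_msupp mcoeffCM mcoeffX inE.
case: (mu =P x) => [->|_]; first by rewrite eqxx.
by rewrite mulr0 eqxx.
Qed.

Definition L' (c : {ffun 'I_n -> int}) (f : {mpoly K[m]}) : K :=
  \sum_(a <- msupp f | wtE a == c) f@_a.

Lemma Lemb c f : L c (embE n f) = L' c f.
Proof.
rewrite {1}(mpolyE f) /embE raddf_sum Lsum /L' [RHS]big_mkcond /=.
apply: eq_bigr => a _; rewrite mmapZ embEX L_mono wt_iota.
by case: eqP => _; rewrite ?mulr1 ?mulr0.
Qed.

Lemma IED_L' f : IED edge f -> forall c, L' c f = 0.
Proof. by move=> H c; rewrite -Lemb; apply: L_ideal. Qed.

End Main.


Section Cyc.
Variables (n m : nat) (edge : 'I_m -> 'I_n * 'I_n).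
Hypothesis Hloop : forall h, (edge h).1 != (edge h).2.
Variables (a b : 'I_m -> nat).

Definition step (u w : 'I_n) (h : 'I_m) : bool :=
  (0 < a h)%N && (edge h == (u, w)) || (0 < b h)%N && (edge h == (w, u)).

Lemma step_noloop u h : ~~ step u u h.
Proof.
apply/negP; case/orP => /andP [_ /eqP E]; move: (Hloop h); by rewrite E eqxx.
Qed.

Lemma find_cycle :
  (forall h, ~~ ((0 < a h) && (0 < b h))%N) ->
  (forall u, (exists h w, step w u h) -> exists h w, step u w h) ->
  (exists h, (0 < a h) || (0 < b h))%N ->
  exists vs (f : 'I_n -> 'I_n) (g : 'I_n -> 'I_m),
  [/\ (2 <= size vs)%N, uniq vs, uniq (map g vs),
      forall k, (k < size vs)%N -> forall v0, nth v0 vs ((k.+1) %% size vs) = f (nth v0 vs k)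
    & forall u, u \in vs -> step u (f u) (g u)].
Proof.
move=> Hdis Hbal [h0 Hh0].
pose hasin u := [exists h, exists w, step w u h].
pose nxt u : 'I_n * 'I_m := odflt (u, h0) [pick p : 'I_n * 'I_m | step u p.1 p.2].
pose f u := (nxt u).1; pose g u := (nxt u).2.
have Hnxt u : hasin u -> step u (f u) (g u) /\ hasin (f u).
  move=> Hu; rewrite /f /g /nxt; case: pickP => [p Hp | Hn] /=.
    by split => //; apply/existsP; exists p.2; apply/existsP; exists u.
  have [h [w Hs]] : exists h w, step u w h.
    by apply: Hbal; case/existsP: Hu => h /existsP [w Hw]; exists h, w.
  by move: (Hn (w, h)); rewrite /= Hs.
pose x0 := if (0 < a h0)%N then (edge h0).2 else (edge h0).1.
have Hx0 : hasin x0.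
  apply/existsP; exists h0; rewrite /x0; case: ifP => Ha.
    by apply/existsP; exists (edge h0).1; rewrite /step Ha -surjective_pairing eqxx.
  apply/existsP; exists (edge h0).2; rewrite /step Ha /=.
  by move: Hh0; rewrite Ha /= => ->; rewrite -surjective_pairing eqxx.
have Hall j : hasin (iter j f x0).
  by elim: j => [|j IH] //=; case: (Hnxt _ IH).
have Hln : looping f x0 n.
  apply/negPn; rewrite -looping_uniq; apply/negP => /card_uniqP Hc.
  by move: (max_card (mem (traject f x0 n.+1))); rewrite Hc size_traject card_ord ltnn.
have Hex : exists j, looping f x0 j by exists n.
pose k := ex_minn Hex.
have [Hk Hkmin] : looping f x0 k /\ forall j, looping f x0 j -> (k <= j)%N.
  by rewrite /k; case: ex_minnP.
case Ek : k Hk Hkmin => [|k'] Hk Hkmin; first by rewrite /looping /= in Hk.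
have Hu : uniq (traject f x0 k'.+1).
  rewrite looping_uniq; apply/negP => /Hkmin; by rewrite ltnn.
case/trajectP: Hk => i Hi Hiter.
pose y := iter i f x0; pose len := (k'.+1 - i)%N.
have Htr : traject f x0 k'.+1 = traject f x0 i ++ traject f y len.
  by rewrite -trajectD subnKC // ltnW.
have Huv : uniq (traject f y len) by move: Hu; rewrite Htr cat_uniq => /and3P [].
have Hlen0 : (0 < len)%N by rewrite subn_gt0.
have Hper : iter len f y = y by rewrite /y -iterD subnK ?Hiter // ltnW.
have Hmem u : u \in traject f y len -> step u (f u) (g u).
  case/trajectP => j _ ->; rewrite /y -iterD; by case: (Hnxt _ (Hall (j + i)%N)).
have Hnth j : (j < len)%N -> forall v0, nth v0 (traject f y len) (j.+1 %% len) = f (nth v0 (traject f y len) j).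
  move=> Hj v0.
  rewrite !(set_nth_default y v0) ?size_traject ?ltn_mod // !nth_traject //; last by rewrite ltn_mod.
  case: (ltngtP j.+1 len) => Hj'.
  - by rewrite modn_small // iterS.
  - by move: Hj'; rewrite ltnS leqNgt Hj.
  - by rewrite Hj' modnn /= -iterS Hj' Hper.
exists (traject f y len), f, g; split.
- rewrite size_traject; case: len Hlen0 Hper Hmem {Huv Hnth Htr} => [|[|l]] // _ /= Hper Hmem.
  by move: (Hmem y (mem_head _ _)); rewrite Hper (negbTE (step_noloop _ _)).
- exact: Huv.
- rewrite map_inj_in_uniq // => u v Hu' Hv' Eg.
  move: (Hmem u Hu') (Hmem v Hv'); rewrite -Eg.
  move: (Hdis (g u)) => Hd.
  case/orP => /andP [Ha /eqP E]; case/orP => /andP [Ha' /eqP E'].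
  + by move: E; rewrite E' => -[].
  + by move: Hd; rewrite Ha Ha'.
  + by move: Hd; rewrite Ha Ha'.
  + by move: E; rewrite E' => -[_ ].
- by move=> j; rewrite size_traject => Hj v0; apply: Hnth.
- exact: Hmem.
Qed.
End Cyc.


Lemma big_rot (R : Type) (idx : R) (op : Monoid.com_law idx) (T : Type)
  (vs : seq T) (v0 : T) (F : T -> R) :
  \big[op/idx]_(k < size vs) F (nth v0 vs (k.+1 %% size vs)) =
  \big[op/idx]_(k < size vs) F (nth v0 vs k).
Proof.
symmetry; rewrite (reindex_inj (@ordS_inj (size vs))) /=.
by apply: eq_bigr.
Qed.

Section D.
Variables (K : fieldType) (n m : nat) (edge : 'I_m -> 'I_n * 'I_n).
Hypothesis Hloop : forall h, (edge h).1 != (edge h).2.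
Local Notation Jc := (ideal_gen (@cycle_binomials K n m edge)).

Lemma wtE0 : wtE edge 0%MM = 0.
Proof. by apply/ffunP => i; rewrite !ffunE big1 // => h _; rewrite mnm0E mul0r. Qed.

Lemma wtE_U h : wtE edge U_(h) = [ffun i => w edge h i].
Proof.
apply/ffunP => i; rewrite !ffunE (bigD1 h) //= mnm1E eqxx mul1r big1 ?addr0 //.
by move=> h' Hh'; rewrite mnm1E eq_sym (negbTE Hh') mul0r.
Qed.

Lemma wtE_sum (I : Type) (r : seq I) (P : pred I) (F : I -> 'X_{1..m}) :
  wtE edge (\sum_(i <- r | P i) F i)%MM = \sum_(i <- r | P i) wtE edge (F i).
Proof. by apply: (big_morph (wtE edge)); [apply: wtED | apply: wtE0]. Qed.

Lemma sum_map_rot (V : nmodType) (vs : seq 'I_n) (f : 'I_n -> 'I_n) (F : 'I_n -> V) :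
  (forall k, (k < size vs)%N -> forall v0, nth v0 vs ((k.+1) %% size vs) = f (nth v0 vs k)) ->
  \sum_(u <- vs) F (f u) = \sum_(u <- vs) F u.
Proof.
case: vs => [|v vs'] Hn; first by rewrite !big_nil.
rewrite !(big_nth v) !big_mkord -[RHS](@big_rot _ _ _ _ (v :: vs') v F).
by apply: eq_bigr => k _; rewrite Hn.
Qed.

Lemma wtE_at (a : 'X_{1..m}) u :
  wtE edge a u = Posz (\sum_h a h * ((edge h).2 == u))%N - Posz (\sum_h a h * ((edge h).1 == u))%N.
Proof.
rewrite ffunE /w !(big_morph Posz PoszD erefl) -sumrB; apply: eq_bigr => h _.
by rewrite mulrBr !PoszM.
Qed.

Lemma pos_sum (F : 'I_m -> nat) h : (0 < F h)%N -> (0 < \sum_h F h)%N.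
Proof. by move=> H; rewrite (bigD1 h) //= ltn_addr. Qed.

Lemma pos_sum_ex (F : 'I_m -> nat) : (0 < \sum_h F h)%N -> exists h, (0 < F h)%N.
Proof.
rewrite lt0n sum_nat_seq_neq0 => /hasP [h _ /= H]; exists h; by rewrite lt0n.
Qed.

Lemma fcycle_eq (vs : seq 'I_n) (f : 'I_n -> 'I_n) (g : 'I_n -> 'I_m) :
  (0 < size vs)%N ->
  (forall k, (k < size vs)%N -> forall v0, nth v0 vs ((k.+1) %% size vs) = f (nth v0 vs k)) ->
  f_cycle K edge vs (map g vs) =
  'X_[\sum_(u <- vs | edge (g u) == (u, f u)) U_(g u)] -
  'X_[\sum_(u <- vs | ~~ (edge (g u) == (u, f u))) U_(g u)].
Proof.
case: vs => [//|v vs'] _ Hn; rewrite -!mprodXE.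
rewrite /f_cycle /= -map_cons; congr (_ - _); rewrite (big_nth v) big_mkord size_map;
  apply: eq_big => k /=; rewrite -map_cons (nth_map v) //;
  by rewrite (Hn k (ltn_ord k)).
Qed.

Lemma sum_eqb (g : 'I_n -> 'I_m) h (s : seq 'I_n) :
  (\sum_(u <- s) (g u == h))%N = count_mem h (map g s).
Proof. by elim: s => [|u s IH]; rewrite ?big_nil ?big_cons //= IH. Qed.

Lemma binom d (a b : 'X_{1..m}) : (mdeg a + mdeg b < d)%N -> wtE edge a = wtE edge b ->
  Jc ('X_[a] - 'X_[b]).
Proof.
elim: d a b => [//|d IH] a b Hd Hw.
case: (a =P b) => [-> | Hab]; first by rewrite subrr; apply: ig0.
case: (pickP (fun h => (0 < a h) && (0 < b h))%N) => [h /andP [Ha Hb] | Hdis].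
  have [a1 Ea] : exists a1, a = (a1 + U_(h))%MM.
    by exists (a - U_(h))%MM; rewrite submK // lep1mP -lt0n.
  have [b1 Eb] : exists b1, b = (b1 + U_(h))%MM.
    by exists (b - U_(h))%MM; rewrite submK // lep1mP -lt0n.
  rewrite {}Ea {}Eb in Hd Hw *.
  rewrite !mpolyXD -mulrBl mulrC; apply: igM; apply: IH.
    by move: Hd; rewrite !mdegD mdeg1; lia.
  by move: Hw; rewrite !wtED => /addIr.
have Hbal : forall u, (exists h w, step edge a b w u h) -> exists h w, step edge a b u w h.
  move=> u [h [x Hs]].
  have := congr1 (fun F : {ffun 'I_n -> int} => F u) Hw; rewrite /= !wtE_at => Hu.
  set Pa := (\sum_h a h * ((edge h).2 == u))%N in Hu.
  set Ma := (\sum_h a h * ((edge h).1 == u))%N in Hu.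
  set Pb := (\sum_h b h * ((edge h).2 == u))%N in Hu.
  set Mb := (\sum_h b h * ((edge h).1 == u))%N in Hu.
  have Hnat : (Pa + Mb)%N = (Pb + Ma)%N.
    by lia.
  have Hpos : (0 < Pa + Mb)%N.
    case/orP: Hs => /andP [Hx /eqP E].
      by rewrite ltn_addr // /Pa (@pos_sum _ h) // E eqxx muln1.
    by rewrite ltn_addl // /Mb (@pos_sum _ h) // E eqxx muln1.
  move: Hpos; rewrite Hnat addn_gt0 => /orP [/pos_sum_ex [h' Hh'] | /pos_sum_ex [h' Hh']].
    exists h', (edge h').1; apply/orP; right.
    move: Hh'; rewrite muln_gt0 lt0b => /andP [-> /= /eqP E].
    by rewrite -E -surjective_pairing.
  exists h', (edge h').2; apply/orP; left.
  move: Hh'; rewrite muln_gt0 lt0b => /andP [-> /= /eqP E].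
  by rewrite -E -surjective_pairing.
have Hne : exists h, ((0 < a h) || (0 < b h))%N.
  case: (boolP [exists h, (0 < a h) || (0 < b h)]%N) => [/existsP //|]; rewrite negb_exists => /forallP Hz; exfalso; apply: Hab.
  by apply/mnmP => h; move: (Hz h); rewrite negb_or -!eqn0Ngt => /andP [/eqP -> /eqP ->].
have Hdis' : forall h, ~~ ((0 < a h) && (0 < b h))%N by move=> h; rewrite Hdis.
have [vs [f [g [Hsz Huv Hug Hnth Hstep]]]] := find_cycle Hloop Hdis' Hbal Hne.
pose fw u := edge (g u) == (u, f u).
have Hfa u : u \in vs -> fw u -> (0 < a (g u))%N.
  move=> Hu Hf; case/orP: (Hstep u Hu) => /andP [H /eqP E] //.
  move/eqP: Hf; rewrite E => -[Eu _].
  by move: (Hloop (g u)); rewrite E Eu eqxx.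
have Hfb u : u \in vs -> ~~ fw u -> (0 < b (g u))%N /\ edge (g u) = (f u, u).
  move=> Hu Hf; case/orP: (Hstep u Hu) => /andP [H /eqP E]; last by [].
  by move: Hf; rewrite /fw E eqxx.
pose Cp := (\sum_(u <- vs | fw u) U_(g u))%MM.
pose Cm := (\sum_(u <- vs | ~~ fw u) U_(g u))%MM.
have Hcnt : forall (P : pred 'I_n) h, (\sum_(u <- vs | P u) (g u == h) <= 1)%N.
  move=> P h; apply: (@leq_trans (\sum_(u <- vs) (g u == h))%N).
    by rewrite [X in (_ <= X)%N](bigID P) /= leq_addr.
  by rewrite sum_eqb count_uniq_mem // leq_b1.
have HCp : (Cp <= a)%MM.
  apply/mnm_lepP => h; rewrite /Cp mnm_sumE.
  under eq_bigr do rewrite mnm1E.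
  case Ha: (0 < a h)%N; first exact: leq_trans (Hcnt _ h) Ha.
  rewrite big1_seq // => u /andP [Hf Hu]; apply/eqP; rewrite eqb0; apply/negP => /eqP E.
  by move: (Hfa u Hu Hf); rewrite E Ha.
have HCm : (Cm <= b)%MM.
  apply/mnm_lepP => h; rewrite /Cm mnm_sumE.
  under eq_bigr do rewrite mnm1E.
  case Hb: (0 < b h)%N; first exact: leq_trans (Hcnt _ h) Hb.
  rewrite big1_seq // => u /andP [Hf Hu]; apply/eqP; rewrite eqb0; apply/negP => /eqP E.
  by move: (Hfb u Hu Hf).1; rewrite E Hb.
have [a1 Ea] : exists a1, a = (a1 + Cp)%MM by exists (a - Cp)%MM; rewrite submK.
have [b1 Eb] : exists b1, b = (b1 + Cm)%MM by exists (b - Cm)%MM; rewrite submK.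
have HdC : (mdeg Cp + mdeg Cm)%N = size vs.
  rewrite /Cp /Cm !mdeg_sum; under eq_bigr do rewrite mdeg1.
  under [X in (_ + X)%N]eq_bigr do rewrite mdeg1.
  by rewrite -sum1_size [RHS](bigID fw).
have HwC : wtE edge Cp = wtE edge Cm.
  apply/ffunP => i; rewrite /Cp /Cm !wtE_sum !sum_ffunE.
  transitivity (\sum_(u <- vs | fw u) ((f u == i)%:Z - (u == i)%:Z)).
    rewrite big_seq_cond [RHS]big_seq_cond; apply: eq_bigr => u /andP [Hu Hf].
    by move/eqP: Hf => Hf; rewrite wtE_U ffunE /w Hf.
  transitivity (\sum_(u <- vs | ~~ fw u) ((u == i)%:Z - (f u == i)%:Z)); last first.
    rewrite big_seq_cond [RHS]big_seq_cond; apply: eq_bigr => u /andP [Hu Hf].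
    by rewrite wtE_U ffunE /w (Hfb u Hu Hf).2.
  have H0 : \sum_(u <- vs) ((f u == i)%:Z - (u == i)%:Z) = 0.
    by rewrite sumrB (sum_map_rot (fun u => (u == i)%:Z) Hnth) subrr.
  move: H0; rewrite (bigID fw) /= => /eqP; rewrite addr_eq0 => /eqP ->.
  by rewrite -sumrN; apply: eq_bigr => u _; rewrite opprB.
rewrite Ea Eb in Hd Hw; rewrite Ea Eb !mpolyXD.
have -> : 'X_[a1] * 'X_[Cp] - 'X_[b1] * 'X_[Cm] =
  'X_[a1] * ('X_[Cp] - 'X_[Cm]) + 'X_[Cm] * ('X_[a1] - 'X_[b1]) :> {mpoly K[m]} by ring.
apply: igD; apply: igM.
  apply: igS; exists vs, (map g vs); split; last first.
    by rewrite (fcycle_eq g _ Hnth) // ltnW.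
  split => //; first by rewrite size_map.
  move=> k Hk v0 e0 /=; rewrite (nth_map v0) // Hnth //.
  by case/orP: (Hstep _ (mem_nth v0 Hk)) => /andP [_ /eqP ->]; [left|right].
apply: IH.
  by move: Hd; rewrite !mdegD; lia.
by move: Hw; rewrite !wtED HwC => /addIr.
Qed.

End D.


Section E.
Variables (K : fieldType) (n m : nat) (edge : 'I_m -> 'I_n * 'I_n).
Hypothesis Hloop : forall h, (edge h).1 != (edge h).2.
Local Notation Jc := (ideal_gen (@cycle_binomials K n m edge)).
Local Notation N := (m + n + n)%N.
Local Notation J := (ideal_gen (IDE_gens edge)).

Lemma rep (f : {mpoly K[m]}) : (forall c, L' edge c f = 0) -> Jc f.
Proof.
move=> HL.
set s := msupp f.
pose r a := nth a s (find (fun b => wtE edge b == wtE edge a) s).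
have Hr a : wtE edge (r a) = wtE edge a.
  rewrite /r; case: (boolP (has (fun b => wtE edge b == wtE edge a) s)) => H.
    by move/eqP: (nth_find a H).
  by rewrite (hasNfind H) nth_default.
have Hrr a b : b \in s -> (r a == r b) = (wtE edge a == wtE edge b).
  move=> Hb; apply/eqP/eqP => [E | E]; first by rewrite -Hr E Hr.
  rewrite /r E; apply: set_nth_default; rewrite -has_find; apply/hasP; exists b => //.
rewrite (mpolyE f) -/s.
have -> : \sum_(a <- s) f@_a *: 'X_[a] =
    \sum_(a <- s) f@_a *: ('X_[a] - 'X_[r a]) + \sum_(a <- s) f@_a *: 'X_[r a].
  rewrite -big_split; apply: eq_bigr => a _ /=.
  by rewrite -scalerDr subrK.
have -> : \sum_(a <- s) f@_a *: 'X_[r a] = 0.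
  apply/mpolyP => mu; rewrite mcoeff0 raddf_sum /=.
  under eq_bigr do rewrite mcoeffZ mcoeffX.
  case: (boolP (has (fun a => r a == mu) s)) => [/hasP [a0 Ha0 /eqP E] | Hn].
    rewrite -E; apply: etrans (HL (wtE edge a0)); rewrite /L' -/s big_mkcond [RHS]big_mkcond big_seq [RHS]big_seq.
    apply: eq_bigr => a Ha; rewrite Hrr //.
    by case: eqP => _; rewrite ?mulr1 ?mulr0.
  rewrite big_seq big1 // => a Ha.
  have : ~~ (r a == mu) by apply: contra Hn => H; apply/hasP; exists a.
  by move/negbTE ->; rewrite mulr0.
rewrite addr0; apply: ig_sum => a _; rewrite -mul_mpolyC; apply: igM.
apply: (@binom _ _ _ _ Hloop (mdeg a + mdeg (r a)).+1) => //.
Qed.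

Lemma embE_X (h : 'I_m) : embE n ('X_h : {mpoly K[m]}) = 'X_(evar n h).
Proof. by rewrite /embE mmapX mmap1U. Qed.

Lemma embE_M (p q : {mpoly K[m]}) : embE n (p * q) = embE n p * embE n q.
Proof. by rewrite /embE rmorphM. Qed.

Lemma embE_B (p q : {mpoly K[m]}) : embE n (p - q) = embE n p - embE n q.
Proof. by rewrite /embE rmorphB. Qed.

Lemma embE_sum (I : Type) (r : seq I) (P : pred I) (F : I -> {mpoly K[m]}) :
  embE n (\sum_(i <- r | P i) F i) = \sum_(i <- r | P i) embE n (F i).
Proof. by rewrite /embE rmorph_sum. Qed.

Lemma embE_prod (I : Type) (r : seq I) (P : pred I) (F : I -> {mpoly K[m]}) :
  embE n (\prod_(i <- r | P i) F i) = \prod_(i <- r | P i) embE n (F i).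
Proof. by rewrite /embE rmorph_prod. Qed.

Lemma zv1 (i : 'I_n) : cong (IDE_gens edge) ('X_(zvar m i) * 'X_(vvar m i) : {mpoly K[N]}) 1.
Proof. by apply: igS; right; exists i. Qed.

Lemma cong_prod1 (I : Type) (r : seq I) (P : pred I) (F : I -> {mpoly K[N]}) :
  (forall i, P i -> cong (IDE_gens edge) (F i) 1) ->
  cong (IDE_gens edge) (\prod_(i <- r | P i) F i) 1.
Proof.
move=> H; have := @cong_prod _ _ _ r P F (fun _ => 1) H.
by rewrite big1_eq.
Qed.

Lemma cyc_core (vs : seq 'I_n) (es : seq 'I_m) v0 e0 :
  size es = size vs ->
  (forall k, (k < size vs)%N -> forall (v0 : 'I_n) (e0 : 'I_m),
      let a := nth v0 vs k in
      let b := nth v0 vs ((k.+1) %% size vs) in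
      let e := nth e0 es k in
      edge e = (a, b) \/ edge e = (b, a)) ->
  J (embE n ((\prod_(k < size es | edge (nth e0 es k) == (nth v0 vs k, nth v0 vs (k.+1 %% size vs)))
                 'X_(nth e0 es k) -
             \prod_(k < size es | ~~ (edge (nth e0 es k) == (nth v0 vs k, nth v0 vs (k.+1 %% size vs))))
                 'X_(nth e0 es k)) : {mpoly K[m]})).
Proof.
move=> Hes Hadj.
rewrite Hes embE_B !embE_prod.
under eq_bigr do rewrite embE_X.
under [X in _ - X]eq_bigr do rewrite embE_X.
set q := size vs.
pose A k := nth v0 vs k; pose B k := nth v0 vs (k.+1 %% q).
pose fw (k : 'I_q) := edge (nth e0 es k) == (A k, B k).
pose Z i : {mpoly K[N]} := 'X_(zvar m i); pose V i : {mpoly K[N]} := 'X_(vvar m i).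
rewrite -/(A _) -/(B _).
have H1 : cong (IDE_gens edge) (\prod_(k < q | fw k) 'X_(evar n (nth e0 es k)))
                               (\prod_(k < q | fw k) (Z (A k) * V (B k))).
  apply: cong_prod => k Hf; apply: igS; left; exists (nth e0 es k).
  by move/eqP: Hf => ->.
have H2 : cong (IDE_gens edge) (\prod_(k < q | ~~ fw k) 'X_(evar n (nth e0 es k)))
                               (\prod_(k < q | ~~ fw k) (Z (B k) * V (A k))).
  apply: cong_prod => k Hf; apply: igS; left; exists (nth e0 es k).
  case: (Hadj k (ltn_ord k) v0 e0) => /= E; last by rewrite E.
  by move: Hf; rewrite /fw /A /B E eqxx.
pose PP := \prod_(k < q | fw k) (Z (A k) * V (B k)).
pose QQ := \prod_(k < q | ~~ fw k) (Z (B k) * V (A k)).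
pose U := \prod_(k < q | ~~ fw k) (Z (A k) * V (B k)).
have HPU : cong (IDE_gens edge) (PP * U) 1.
  have -> : PP * U = \prod_(k < q) (Z (A k) * V (B k)) by rewrite [RHS](bigID fw).
  have -> : \prod_(k < q) (Z (A k) * V (B k)) = \prod_(k < q) (Z (A k) * V (A k)).
    rewrite !big_split /=; congr (_ * _); rewrite /B /A /q.
    exact: (@big_rot _ _ _ _ vs v0 V).
  by apply: cong_prod1 => k _; apply: zv1.
have HQU : cong (IDE_gens edge) (QQ * U) 1.
  have -> : QQ * U = \prod_(k < q | ~~ fw k) ((Z (A k) * V (A k)) * (Z (B k) * V (B k))).
    by rewrite /QQ /U -big_split /=; apply: eq_bigr => k _; ring.
  apply: cong_prod1 => k _; rewrite -[1]mulr1; apply: congM; apply: zv1.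
have H3 : cong (IDE_gens edge) PP QQ.
  rewrite /cong.
  have -> : PP - QQ = PP * (1 - QQ * U) + QQ * (PP * U - 1) by ring.
  by apply: igD; apply: igM => //; apply: cong_sym.
apply: (cong_trans H1); apply: (cong_trans H3); exact: cong_sym H2.
Qed.

Lemma cyc_in vs es : is_cycle edge vs es -> J (embE n (f_cycle K edge vs es)).
Proof.
case=> Hsz Hes Huv Hue Hadj.
case: vs Hsz Hes Huv Hadj => [//|v0 vs'] Hsz Hes Huv Hadj.
case: es Hes Hue Hadj => [//|e0 es'] Hes Hue Hadj.
exact: (cyc_core v0 e0 Hes Hadj).
Qed.

End E.


Unset Implicit Arguments.

Theorem theorem6 (K : fieldType) (n m : nat) (edge : 'I_m -> 'I_n * 'I_n) :
  [pchar K] =i pred0 ->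
  simple_digraph edge ->
  forall f : {mpoly K[m]},
    IED edge f <-> ideal_gen (@cycle_binomials K n m edge) f.
Proof.
move=> _ [Hinj Hloop] f; split.
- by move=> H; apply: (rep Hloop); apply: IED_L'.
- move=> /igE [l [Hl ->]]; rewrite /IED embE_sum big_seq; apply: ig_sum => p Hp.
  rewrite embE_M; apply: igM; case: (Hl p Hp) => vs [es [Hc ->]].
  exact: cyc_in.
Qed.
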